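(* Let $0<\mu<1/2$ be such that for every $r>0$ the spiral $t\mapsto(r\cos t,r\sin t,\mu rt)$ is self-expanded, fix $r>0$ and let $\gamma(t)=(r\cos t,r\sin t,\mu rt)$, $t\in\mathbb{R}$. Let $\lambda=1/\sqrt5$ and $\alpha=\arccos(\lambda)$. Then for every $t\in\mathbb{R}$ the cone $C(t,\alpha)$ does not intersect the line $\{(0,0,z):z\in\mathbb{R}\}$.
   Context: $\mathbb{R}^3$ carries the Euclidean inner product $\langle\cdot,\cdot\rangle$ and norm $\|\cdot\|$. A curve is self-expanded if for all $t_1\le t_2\le t_3$: $\|\gamma(t_1)-\gamma(t_2)\|\le\|\gamma(t_1)-\gamma(t_3)\|$. For $v\in\mathbb{S}^2$ and $\alpha\in[0,\pi)$, $C(v,\alpha)=\{u:\langle u,v\rangle>\|u\|\cos\alpha\}\cup\{0\}$, and $C(t,\alpha)=\gamma(t)+C\big(\gamma'(t)/\|\gamma'(t)\|,\alpha\big)$. *)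

(* Defs.v *)
From Stdlib Require Export Reals Lra.
Open Scope R_scope.

Definition R3 : Type := (R * R * R)%type.
Definition vx (u : R3) : R := fst (fst u).
Definition vy (u : R3) : R := snd (fst u).
Definition vz (u : R3) : R := snd u.
Definition vsub (u v : R3) : R3 := (vx u - vx v, vy u - vy v, vz u - vz v).
Definition vscale (a : R) (u : R3) : R3 := (a * vx u, a * vy u, a * vz u).
Definition inner (u v : R3) : R := vx u * vx v + vy u * vy v + vz u * vz v.
Definition norm3 (u : R3) : R := sqrt (inner u u).
Definition zero3 : R3 := (0, 0, 0).

Definition self_expanded (g : R -> R3) : Prop :=
  forall t1 t2 t3 : R, t1 <= t2 -> t2 <= t3 ->
    norm3 (vsub (g t1) (g t2)) <= norm3 (vsub (g t1) (g t3)).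

Definition has_deriv3 (g dg : R -> R3) : Prop :=
  forall t : R,
    derivable_pt_lim (fun s => vx (g s)) t (vx (dg t)) /\
    derivable_pt_lim (fun s => vy (g s)) t (vy (dg t)) /\
    derivable_pt_lim (fun s => vz (g s)) t (vz (dg t)).

Definition in_cone (v : R3) (alpha : R) (u : R3) : Prop :=
  inner u v > norm3 u * cos alpha \/ u = zero3.

Definition in_cone_at (g dg : R -> R3) (t alpha : R) (x : R3) : Prop :=
  in_cone (vscale (/ norm3 (dg t)) (dg t)) alpha (vsub x (g t)).

Definition spiral (mu r : R) (t : R) : R3 := (r * cos t, r * sin t, mu * r * t).

(* Main.v *)
Require Import Defs.
From Stdlib Require Import Reals Lra Psatz.

Theorem lemma4p5 (mu r : R) (dgamma : R -> R3) :
  0 < mu -> mu < 1 / 2 ->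
  (forall r' : R, 0 < r' -> self_expanded (spiral mu r')) ->
  0 < r ->
  has_deriv3 (spiral mu r) dgamma ->
  let lambda := 1 / sqrt 5 in
  let alpha := acos lambda in
  forall t z : R, ~ in_cone_at (spiral mu r) dgamma t alpha (0, 0, z).
Proof.
  intros hmu hmu2 _ hr hd lambda alpha t z H.
  unfold in_cone_at, in_cone in H.
  destruct (hd t) as [h1 [h2 h3]].
  assert (e1 : vx (dgamma t) = r * (- sin t)).
  { apply (uniqueness_limite (fun s => vx (spiral mu r s)) t); auto.
    change (derivable_pt_lim (mult_real_fct r cos) t (r * - sin t)).
    apply derivable_pt_lim_scal, derivable_pt_lim_cos. }
  assert (e2 : vy (dgamma t) = r * cos t).
  { apply (uniqueness_limite (fun s => vy (spiral mu r s)) t); auto.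
    change (derivable_pt_lim (mult_real_fct r sin) t (r * cos t)).
    apply derivable_pt_lim_scal, derivable_pt_lim_sin. }
  assert (e3 : vz (dgamma t) = (mu * r) * 1).
  { apply (uniqueness_limite (fun s => vz (spiral mu r s)) t); auto.
    change (derivable_pt_lim (mult_real_fct (mu * r) id) t ((mu * r) * 1)).
    apply derivable_pt_lim_scal, derivable_pt_lim_id. }
  remember (dgamma t) as d. destruct d as [[a b] c].
  unfold vx, vy, vz in e1, e2, e3; simpl in e1, e2, e3. subst a b c.
  pose proof (sin2_cos2 t) as sc. unfold Rsqr in sc.
  assert (q5 : 0 < sqrt 5) by (apply sqrt_lt_R0; lra).
  assert (q5s : sqrt 5 * sqrt 5 = 5) by (apply sqrt_sqrt; lra).
  assert (hlam : cos alpha = 1 / sqrt 5).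
  { unfold alpha, lambda. apply cos_acos. split.
    - assert (0 < 1 / sqrt 5) by (apply Rdiv_lt_0_compat; lra). lra.
    - apply Rmult_le_reg_r with (sqrt 5); auto.
      field_simplify; try lra. nra. }
  set (s := sqrt (1 + mu * mu)).
  assert (sp : 0 < s) by (apply sqrt_lt_R0; nra).
  assert (ss : s * s = 1 + mu * mu) by (apply sqrt_sqrt; nra).
  assert (hn : norm3 (r * - sin t, r * cos t, mu * r * 1) = r * s).
  { unfold norm3, inner, vx, vy, vz; simpl.
    replace (r * - sin t * (r * - sin t) + r * cos t * (r * cos t) +
             mu * r * 1 * (mu * r * 1)) with ((r * r) * (1 + mu * mu)) by nra.
    rewrite sqrt_mult_alt by nra. rewrite sqrt_square by lra. reflexivity. }
  rewrite hn, hlam in H.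
  set (w := z - mu * r * t).
  assert (hN : inner (vsub (0, 0, z) (spiral mu r t)) (vsub (0, 0, z) (spiral mu r t))
               = r * r + w * w).
  { unfold inner, vsub, spiral, vx, vy, vz, w; simpl. nra. }
  destruct H as [H | H].
  - unfold norm3 in H. rewrite hN in H.
    assert (hi : inner (vsub (0, 0, z) (spiral mu r t))
                  (vscale (/ (r * s)) (r * - sin t, r * cos t, mu * r * 1)) = mu * w / s).
    { unfold inner, vsub, vscale, spiral, vx, vy, vz, w; simpl. field. split; lra. }
    rewrite hi in H.
    set (N := sqrt (r * r + w * w)) in H.
    assert (Np : 0 <= N) by apply sqrt_pos.
    assert (NN : N * N = r * r + w * w) by (apply sqrt_sqrt; nra).
    assert (H' : mu * w * sqrt 5 > N * s).
    { apply Rmult_gt_compat_r with (r := s * sqrt 5) in H; [|nra].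
      replace (mu * w / s * (s * sqrt 5)) with (mu * w * sqrt 5) in H by (field; lra).
      replace (N * (1 / sqrt 5) * (s * sqrt 5)) with (N * s) in H by (field; lra).
      exact H. }
    assert (pos : 0 < mu * w * sqrt 5) by nra.
    assert (Nsp : 0 <= N * s) by nra.
    assert (sq : (mu * w * sqrt 5) * (mu * w * sqrt 5) > (N * s) * (N * s)).
    { set (A := mu * w * sqrt 5) in *. set (B := N * s) in *.
      assert (0 < (A - B) * (A + B)) by (apply Rmult_lt_0_compat; lra). nra. }
    replace ((mu * w * sqrt 5) * (mu * w * sqrt 5)) with (5 * (mu * mu) * (w * w)) in sq
      by (symmetry; transitivity ((mu*mu)*(w*w)*(sqrt 5 * sqrt 5)); [ring | rewrite q5s; ring]).
    replace ((N * s) * (N * s)) with ((r * r + w * w) * (1 + mu * mu)) in sq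
      by (symmetry; transitivity ((N*N)*(s*s)); [ring | rewrite NN, ss; ring]).
    assert (0 <= (1 - 4 * (mu * mu)) * (w * w)) by (apply Rmult_le_pos; nra).
    assert (0 <= (r * r) * (1 + mu * mu)) by (apply Rmult_le_pos; nra).
    nra.
  - unfold vsub, spiral, zero3, vx, vy, vz in H; simpl in H.
    injection H as H1 H2 H3. nra.
Qed.
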